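(* Let $P$ be a finite poset and $p\in(0,1]$. For any order ideal $J'\in J(P)$ and any $t\ge 0$, \[ \mathbb{P}\big(T_{J(P)}(J')\ge t\big)\le \mathbb{P}\big(T(J(P))\ge t\big). \]
   Context: An order ideal of $P$ is a subset $I\subseteq P$ such that $x\in I$ and $y\le x$ imply $y\in I$. $J(P)$ is the lattice of order ideals of $P$ ordered by inclusion. The Ungarian Markov chain on $J(P)$ with parameter $p$ moves from an order ideal $I$ by deleting from $I$ a random subset of its maximal elements, each maximal element being deleted independently with probability $p$ (equivalently: for a finite lattice $L$, from $x$ choose each element covered by $x$ independently with probability $p$ and move to the meet of $x$ and the chosen elements). $T_{J(P)}(J')$ is the number of steps for this chain started at $J'$ to reach $\varnothing$, and $T(J(P))=T_{J(P)}(P)$. *)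

(* Defs.v *)
From HB Require Import structures.
From mathcomp Require Import all_boot all_order all_algebra.
Set Implicit Arguments. Unset Strict Implicit. Unset Printing Implicit Defensive.
Import Order.TTheory GRing.Theory Num.Theory.
Local Open Scope ring_scope.

Section Ungarian.
Variables (d : Order.disp_t) (P : finPOrderType d) (R : realFieldType) (p : R).

Definition order_ideal (I : {set P}) : bool :=
  [forall x, forall y, ((x \in I) && (y <= x)%O) ==> (y \in I)].

Definition maxels (I : {set P}) : {set P} :=
  [set x in I | [forall y in I, ~~ (x < y)%O]].

(* one-step transition probability of the Ungarian Markov chain on J(P):
   from I, each maximal element of I is deleted independently with prob. p;
   the chain moves to K = I minus the deleted set D (D a subset of maxels I). *)
Definition ung_trans (I K : {set P}) : R :=
  if (K \subset I) && ((I :\: K) \subset maxels I) then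
    p ^+ #|I :\: K| * (1 - p) ^+ (#|maxels I| - #|I :\: K|)%N
  else 0.

(* ung_surv n I = probability that the chain started at I has X_0, ..., X_{n-1}
   all different from the empty set, i.e. P(T_{J(P)}(I) >= n), where
   T_{J(P)}(I) = min { k : X_k = empty set }. *)
Fixpoint ung_surv (n : nat) (I : {set P}) : R :=
  match n with
  | 0 => 1
  | n'.+1 => if I == set0 then 0
             else \sum_(K : {set P}) ung_trans I K * ung_surv n' K
  end.

End Ungarian.

(* Main.v *)
Require Import Defs.
From HB Require Import structures.
From mathcomp Require Import all_boot all_order all_algebra.
Import Order.TTheory GRing.Theory Num.Theory.
Local Open Scope ring_scope.

Section Proof.
Variables (d : Order.disp_t) (P : finPOrderType d) (R : realFieldType) (p : R).
Variables (hp0 : 0 < p) (hp1 : p <= 1).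

Definition wt (S C : {set P}) : R := p ^+ #|C| * (1 - p) ^+ (#|S| - #|C|).
Definition G (S : {set P}) (h : {set P} -> R) : R :=
  \sum_(C : {set P} | C \subset S) wt S C * h C.

Lemma wt_ge0 S C : 0 <= wt S C.
Proof. by rewrite /wt mulr_ge0 // exprn_ge0 // ?(ltW hp0) // subr_ge0. Qed.

Lemma G_U1 (x : P) (S : {set P}) (h : {set P} -> R) : x \notin S ->
  G (x |: S) h = p * G S (fun C => h (x |: C)) + (1 - p) * G S h.
Proof.
move=> xS; rewrite /G (bigID (fun C : {set P} => x \in C)) /=; congr (_ + _).
  rewrite (reindex_onto (fun D => x |: D) (fun C => C :\ x)); last first.
    by move=> C /andP[_ xC]; rewrite setD1K.
  have eqP1 : forall D, ((x |: D \subset x |: S) && (x \in x |: D) && ((x |: D) :\ x == D)) = (D \subset S).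
    move=> D; rewrite setU11 andbT.
    apply/idP/idP.
      move=> /andP[h1 /eqP h2]; apply/subsetP => y yD.
      have yx : y != x by apply/eqP => yx; move: yD; rewrite -h2 yx !inE eqxx.
      by have := subsetP h1 y; rewrite !inE yD (negbTE yx) orbT /=; apply.
    move=> DS; have xD : x \notin D by apply/negP => /(subsetP DS); rewrite (negbTE xS).
    rewrite setU1K // eqxx andbT; apply/subsetP => y; rewrite !inE.
    by case/orP => [->//|/(subsetP DS) ->]; rewrite orbT.
  rewrite big_distrr /=; apply: eq_big => [D|D]; first exact: eqP1.
  rewrite eqP1 => DS; have xD : x \notin D by apply/negP => /(subsetP DS); rewrite (negbTE xS).
  rewrite /wt !cardsU1 xD xS /= add1n subSS exprS !mulrA.
  done.
rewrite big_distrr /=; apply: eq_big.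
  move=> C; apply/idP/idP.
    move=> /andP[h1 xC]; apply/subsetP => y yC.
    have yx : y != x by apply/eqP => yx; move: xC; rewrite -yx yC.
    by have := subsetP h1 y yC; rewrite !inE (negbTE yx).
  move=> CS; rewrite (subset_trans CS (subsetUr _ _)) /=.
  by apply/negP => /(subsetP CS); rewrite (negbTE xS).
move=> C /andP[h1 xC].
have CS : C \subset S.
  apply/subsetP => y yC.
  have yx : y != x by apply/eqP => yx; move: xC; rewrite -yx yC.
  by have := subsetP h1 y yC; rewrite !inE (negbTE yx).
rewrite /wt cardsU1 xS add1n subSn ?subset_leq_card // exprS.
by rewrite (mulrCA (p ^+ _)) -(mulrA (1 - p)).
Qed.

Lemma G_marg (M : {set P}) (h : {set P} -> R) n : forall S : {set P},
  #|S :\: M| = n -> M \subset S -> G S (fun C => h (M :&: C)) = G M h.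
Proof.
elim: n => [|n IH] S hn MS.
  have SM : S = M.
    apply/eqP; rewrite eqEsubset MS andbT; apply/subsetP => y yS.
    apply/negPn/negP => yM.
    have : (0 < #|S :\: M|)%N by apply/card_gt0P; exists y; rewrite inE yM.
    by rewrite hn.
  rewrite SM /G; apply: eq_bigr => C CM; congr (_ * h _).
  by apply/setIidPr.
have : (0 < #|S :\: M|)%N by rewrite hn.
case/card_gt0P => x; rewrite inE => /andP[xM xS].
have -> : S = x |: (S :\ x) by rewrite setD1K.
rewrite G_U1 ?setD11 //.
have eqI : forall C, M :&: (x |: C) = M :&: C.
  move=> C; apply/setP => y; rewrite !inE.
  by case: (eqVneq y x) => [->|]; rewrite ?(negbTE xM) //.
have -> : G (S :\ x) (fun C => h (M :&: (x |: C))) = G (S :\ x) (fun C => h (M :&: C)).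
  by rewrite /G; apply: eq_bigr => C _; rewrite eqI.
have MS' : M \subset S :\ x.
  apply/subsetP => y yM; rewrite !inE (subsetP MS) // andbT.
  by apply/eqP => yx; move: yM; rewrite yx (negbTE xM).
have hn' : #|(S :\ x) :\: M| = n.
  have : S :\: M = x |: ((S :\ x) :\: M).
    apply/setP => y; rewrite !inE; case: (eqVneq y x) => [->|] //=.
    by rewrite xM xS.
  move=> E; move: hn; rewrite E cardsU1 !inE eqxx andbF /= add1n.
  by case.
by rewrite IH // -mulrDl addrC subrK mul1r.
Qed.



Definition sdiff (I D : {set P}) : {set P} := (I :\: D) :|: (D :\: I).

Lemma sdiff_inj (I : {set P}) : injective (sdiff I).
Proof.
apply: (can_inj (g := sdiff I)) => D; apply/setP => y; rewrite !inE.
by case: (y \in I); case: (y \in D).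
Qed.

Lemma maxels_sub (I : {set P}) : maxels I \subset I.
Proof. by apply/subsetP => y; rewrite inE => /andP[]. Qed.

Lemma trans_sum (I : {set P}) (f : {set P} -> R) :
  \sum_(K : {set P}) ung_trans p I K * f K = G (maxels I) (fun D => f (I :\: D)).
Proof.
rewrite (reindex_inj (sdiff_inj I)) /G [RHS]big_mkcond /=.
apply: eq_bigr => D _.
have MI := maxels_sub I.
case: ifP => DM.
  have DI : D \subset I := subset_trans DM MI.
  have E1 : sdiff I D = I :\: D.
    apply/setP => y; rewrite !inE; case yD: (y \in D) => /=.
      by rewrite (subsetP DI) ?andbF.
    by rewrite andbF orbF.
  have E2 : I :\: (I :\: D) = D.
    apply/setP => y; rewrite !inE; case yD: (y \in D) => /=.
      by rewrite (subsetP DI).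
    by case: (y \in I).

  by rewrite /ung_trans E1 E2 subsetDl DM.
rewrite /ung_trans; case: ifP => [/andP[h1 h2]|_]; last by rewrite mul0r.
exfalso; move/negP: DM; apply; apply/subsetP => y yD.
case yI: (y \in I).
  by apply: (subsetP h2); rewrite !inE yI yD.
by have := subsetP h1 y; rewrite !inE yI yD /=; move=> /(_ isT).
Qed.

Lemma step_mono (I I' : {set P}) (f : {set P} -> R) : I \subset I' ->
  (forall A B : {set P}, A \subset B -> f A <= f B) ->
  \sum_(K : {set P}) ung_trans p I K * f K <= \sum_(K : {set P}) ung_trans p I' K * f K.
Proof.
move=> II' fmono; rewrite !trans_sum.
rewrite -(G_marg (maxels I) (fun D => f (I :\: D)) _ setT erefl (subsetT _)).
rewrite -(G_marg (maxels I') (fun D => f (I' :\: D)) _ setT erefl (subsetT _)).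
rewrite /G; apply: ler_sum => C _; apply: ler_wpM2l; first exact: wt_ge0.
apply: fmono; apply/subsetP => y; rewrite !inE => /andP[hy yI].
rewrite (subsetP II') // andbT; apply: contra hy => /andP[/andP[yI' ymax] yC].
rewrite yC andbT yI /=; apply/forallP => z; apply/implyP => zI.
by have := forallP ymax z; rewrite (subsetP II') //.
Qed.

Lemma trans_ge0 (I K : {set P}) : 0 <= ung_trans p I K.
Proof.
rewrite /ung_trans; case: ifP => // _.
by rewrite mulr_ge0 // exprn_ge0 // ?(ltW hp0) // subr_ge0.
Qed.

Lemma surv_ge0 n (I : {set P}) : 0 <= ung_surv p n I.
Proof.
elim: n I => [|n IH] I /=; first exact: ler01.
case: ifP => // _; apply: sumr_ge0 => K _; exact: mulr_ge0 (trans_ge0 _ _) (IH _).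
Qed.

Lemma surv_mono n : forall I I' : {set P}, I \subset I' -> ung_surv p n I <= ung_surv p n I'.
Proof.
elim: n => [|n IH] I I' II' /=; first exact: lexx.
case: ifP => I0.
  exact: (surv_ge0 n.+1 I').
have -> : (I' == set0) = false.
  apply/negbTE; case/set0Pn: (negbT I0) => x xI; apply/set0Pn; exists x.
  exact: (subsetP II').
exact: step_mono.
Qed.

End Proof.

Theorem corollary2p4 (d : Order.disp_t) (P : finPOrderType d) (R : realFieldType)
  (p : R) (hp0 : 0 < p) (hp1 : p <= 1) (J' : {set P}) (hJ' : order_ideal J')
  (t : nat) :
  ung_surv p t J' <= ung_surv p t [set: P].
Proof.
exact: (@surv_mono d P R p hp0 hp1 t J' [set: P] (subsetT J')).
Qed.
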